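(* Let $\mathcal H$ be a real Hilbert space and $k\ge1$. If a nonzero continuous symmetric $k$-linear form $T$ on $\mathcal H$ attains its norm at $(\mathbf{x}_1,\ldots,\mathbf{x}_k)$, where $\mathbf{x}_1,\ldots,\mathbf{x}_k$ are norm one vectors, then $\dim(\operatorname{span}\{\mathbf{x}_1,\ldots,\mathbf{x}_k\})\le 2$.
   Context: $\|T\|=\sup\{|T(\mathbf{w}_1,\ldots,\mathbf{w}_k)|:\|\mathbf{w}_i\|\le1\}$, and $T$ attains its norm at $(\mathbf{x}_1,\ldots,\mathbf{x}_k)$ if $|T(\mathbf{x}_1,\ldots,\mathbf{x}_k)|=\|T\|$. *)

(* Defs.v *)
From HB Require Import structures.
From mathcomp Require Import all_boot all_order all_algebra all_fingroup.
From mathcomp Require Import all_classical all_reals all_analysis.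
Set Implicit Arguments. Unset Strict Implicit. Unset Printing Implicit Defensive.
Import Order.TTheory GRing.Theory Num.Theory.
Import numFieldNormedType.Exports.
Local Open Scope classical_set_scope.
Local Open Scope ring_scope.

Definition is_inner_product (R : realType) (V : normedModType R)
  (ip : V -> V -> R) : Prop :=
  [/\ (forall x y, ip x y = ip y x),
      (forall (a : R) (x y z : V), ip (a *: x + y) z = a * ip x z + ip y z)
    & (forall x, `|x| ^+ 2 = ip x x)].

Definition upd (V : Type) (k : nat) (w : 'I_k -> V) (i : 'I_k) (u : V) : 'I_k -> V :=
  fun j => if j == i then u else w j.

Definition multilinear (R : realType) (V : normedModType R) (k : nat)
  (T : ('I_k -> V) -> R) : Prop :=
  forall (w : 'I_k -> V) (i : 'I_k) (a : R) (u v : V),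
    T (upd w i (a *: u + v)) = a * T (upd w i u) + T (upd w i v).

Definition sym_form (R : realType) (V : normedModType R) (k : nat)
  (T : ('I_k -> V) -> R) : Prop :=
  forall (s : {perm 'I_k}) (w : 'I_k -> V), T (fun j => w (s j)) = T w.

Definition form_norm (R : realType) (V : normedModType R) (k : nat)
  (T : ('I_k -> V) -> R) : R :=
  sup [set `|T w| | w in [set w : 'I_k -> V | forall i, `|w i| <= 1]].

Definition in_span (R : realType) (V : normedModType R) (n : nat)
  (u : 'I_n -> V) (x : V) : Prop :=
  exists c : 'I_n -> R, x = \sum_(j < n) c j *: u j.

(* continuity of T on V^k = 'I_k -> V with the product topology
   (k is finite, so this is the usual topology of V^k) *)
Definition form_continuous (R : realType) (V : normedModType R) (k : nat)
  (T : ('I_k -> V) -> R) : Prop :=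
  continuous (T : {ptws 'I_k -> V} -> R).

(* Main.v *)
Set Warnings "-all".
Require Import Defs.
From HB Require Import structures.
From mathcomp Require Import all_boot all_order all_algebra all_fingroup.
From mathcomp Require Import all_classical all_reals all_analysis.
From mathcomp Require Import ring lra zify.
Import Order.TTheory GRing.Theory Num.Theory.
Import numFieldNormedType.Exports.
Local Open Scope classical_set_scope.
Local Open Scope ring_scope.
Set Implicit Arguments. Unset Strict Implicit.

Section IP.
Context (R : realType) (V : normedModType R) (ip : V -> V -> R).
Hypothesis hip : is_inner_product ip.

Lemma ipC x y : ip x y = ip y x. Proof. by case: hip. Qed.
Lemma ipDl a x y z : ip (a *: x + y) z = a * ip x z + ip y z. Proof. by case: hip. Qed.
Lemma ipxx x : ip x x = `|x| ^+ 2. Proof. by case: hip. Qed.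
Lemma ip0l z : ip 0 z = 0.
Proof. have := ipDl 1 0 0 z; rewrite scale1r addr0; lra. Qed.
Lemma ipZl a x z : ip (a *: x) z = a * ip x z.
Proof. by rewrite -[a *: x]addr0 ipDl ip0l addr0. Qed.
Lemma ipDl' x y z : ip (x + y) z = ip x z + ip y z.
Proof. by rewrite -[x]scale1r ipDl mul1r scale1r. Qed.
Lemma ipNl x z : ip (- x) z = - ip x z.
Proof. by rewrite -scaleN1r ipZl mulN1r. Qed.
Lemma ipBl x y z : ip (x - y) z = ip x z - ip y z.
Proof. by rewrite ipDl' ipNl. Qed.
Lemma ipZr a x z : ip z (a *: x) = a * ip z x.
Proof. by rewrite ipC ipZl ipC. Qed.
Lemma ipDr x y z : ip z (x + y) = ip z x + ip z y.
Proof. by rewrite ipC ipDl' !(ipC z). Qed.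
Lemma ipBr x y z : ip z (x - y) = ip z x - ip z y.
Proof. by rewrite ipC ipBl !(ipC z). Qed.

Lemma ip_eq0 d : (forall y, ip d y = 0) -> d = 0.
Proof. move=> H; apply/eqP; rewrite -normr_eq0 -sqrf_eq0 -ipxx H //. Qed.

Lemma L0 (f : V -> R) (K : R) (c : V) :
  (forall a u v, f (a *: u + v) = a * f u + f v) ->
  (forall z, f z <= K * `|z|) -> `|c| = 1 -> f c = K ->
  forall y, f y = K * ip c y.
Proof.
move=> lin bnd c1 fc y.
have f0 : f 0 = 0.
  have := lin 1 0 0; rewrite scale1r addr0; lra.
have fZ a u : f (a *: u) = a * f u by rewrite -[a *: u]addr0 lin f0 addr0.
have fD u v : f (u + v) = f u + f v by rewrite -[u]scale1r lin mul1r scale1r.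
have K0 : 0 <= K.
  have := bnd (- c); rewrite -scaleN1r fZ normrZ normrN1 mul1r c1 mulr1 fc; lra.
have key t : t * (f y - K * ip c y) <= (K * `|y| ^+ 2 / 2) * t ^+ 2.
  have h1 := bnd (c + t *: y).
  rewrite fD fZ fc in h1.
  have h2 : `|c + t *: y| ^+ 2 = 1 + 2 * t * ip c y + t ^+ 2 * `|y| ^+ 2.
    rewrite -ipxx ipDl' !ipDr !ipZl !ipZr ipxx c1 ipxx (ipC y c). ring.
  have h3 : `|c + t *: y| <= (1 + `|c + t *: y| ^+ 2) / 2.
    have := sqr_ge0 (`|c + t *: y| - 1). rewrite !expr2; lra.
  rewrite h2 in h3.
  have h4 := ler_wpM2l K0 h3.
  rewrite -!mulrA; nra.
set c0 := f y - K * ip c y.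
set d := K * `|y| ^+ 2 / 2.
have d0 : 0 <= d by rewrite /d; apply: divr_ge0 => //; apply: mulr_ge0 => //; exact: sqr_ge0.
set t := c0 / (2 * (d + 1)).
have ht : c0 = t * (2 * (d + 1)) by rewrite /t; field; lra.
have := key t; rewrite -/c0 -/d ht => h.
have : t = 0 by nra.
move=> t0; move: ht; rewrite t0 mul0r /c0 => /eqP; rewrite subr_eq0 => /eqP //.
Qed.

Section Tri.
Context (C : V -> V -> V -> R) (M : R).
Hypothesis Clin : forall a u u' v w, C (a *: u + u') v w = a * C u v w + C u' v w.
Hypothesis C12 : forall u v w, C u v w = C v u w.
Hypothesis C23 : forall u v w, C u v w = C u w v.
Hypothesis Cbnd : forall u v w, `|C u v w| <= M * `|u| * `|v| * `|w|.

Lemma C0l v w : C 0 v w = 0.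
Proof. have := Clin 1 0 0 v w; rewrite scale1r addr0; lra. Qed.
Lemma CZl a u v w : C (a *: u) v w = a * C u v w.
Proof. by rewrite -[a *: u]addr0 Clin C0l addr0. Qed.
Lemma CDl u u' v w : C (u + u') v w = C u v w + C u' v w.
Proof. by rewrite -[u]scale1r Clin mul1r scale1r. Qed.
Lemma C13 u v w : C u v w = C w v u.
Proof. by rewrite C12 C23 C12. Qed.
Lemma C3lin v w a u u' : C v w (a *: u + u') = a * C v w u + C v w u'.
Proof. by rewrite (C13 v w (a *: u + u')) (C13 v w u) (C13 v w u') Clin. Qed.

Definition mx a b c := [/\ `|a| = 1, `|b| = 1, `|c| = 1 & C a b c = M].

Lemma mx12 a b c : mx a b c -> mx b a c.
Proof. by case=> *; split=> //; rewrite C12. Qed.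
Lemma mx23 a b c : mx a b c -> mx a c b.
Proof. by case=> *; split=> //; rewrite C23. Qed.

Lemma L1 a b c : mx a b c -> forall y, C a b y = M * ip c y.
Proof.
case=> a1 b1 c1 e; apply: (L0 (f:=C a b)) => //.
- by move=> *; rewrite C3lin.
- move=> z; have := Cbnd a b z; rewrite a1 b1 !mulr1 => h.
  exact: le_trans (ler_norm _) h.
Qed.

Lemma PL a b c : mx a b c -> forall y,
  C a a y + C b b y = 2 * ip a b * M * ip c y.
Proof.
move=> m y.
have [a1 b1 c1 e] := m.
have e1 : C a a c = M * ip b a.
  by rewrite C23; apply: (L1 (mx23 m)).
have e2 : C b b c = M * ip a b.
  by rewrite C23; apply: (L1 (mx23 (mx12 m))).
have n2 : `|a + b| ^+ 2 = 2 + 2 * ip a b.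
  by rewrite -ipxx ipDl' !ipDr ipxx a1 ipxx b1 (ipC b a); ring.
have hf z : C (a + b) (a + b) z = C a a z + C b b z + 2 * C a b z.
  by rewrite CDl (C12 a (a + b)) (C12 b (a + b)) !CDl (C12 b a); ring.
have h : C (a + b) (a + b) y = M * `|a + b| ^+ 2 * ip c y.
  apply: (@L0 (fun z => C (a + b) (a + b) z) (M * `|a + b| ^+ 2) c) => //.
  - by move=> *; rewrite C3lin.
  - move=> z; have := Cbnd (a + b) (a + b) z; rewrite expr2 mulrA.
    exact: le_trans (ler_norm _).
  - by rewrite hf e1 e2 e n2 (ipC b a); ring.
rewrite hf n2 (L1 m y) in h.
lra.
Qed.


Lemma PLs a b c : mx a b c -> forall y,
  C (a + b) (a + b) y = M * `|a + b| ^+ 2 * ip c y.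
Proof.
move=> m y.
have [a1 b1 c1 e] := m.
have e1 : C a a c = M * ip b a.
  by rewrite C23; apply: (L1 (mx23 m)).
have e2 : C b b c = M * ip a b.
  by rewrite C23; apply: (L1 (mx23 (mx12 m))).
have n2 : `|a + b| ^+ 2 = 2 + 2 * ip a b.
  by rewrite -ipxx ipDl' !ipDr ipxx a1 ipxx b1 (ipC b a); ring.
have hf z : C (a + b) (a + b) z = C a a z + C b b z + 2 * C a b z.
  by rewrite CDl (C12 a (a + b)) (C12 b (a + b)) !CDl (C12 b a); ring.
apply: (@L0 (fun z => C (a + b) (a + b) z) (M * `|a + b| ^+ 2) c) => //.
- by move=> *; rewrite C3lin.
- move=> z; have := Cbnd (a + b) (a + b) z; rewrite expr2 mulrA.
  exact: le_trans (ler_norm _).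
- by rewrite hf e1 e2 e n2 (ipC b a); ring.
Qed.

Lemma SM a b c : mx a b c -> a + b != 0 ->
  mx (`|a + b|^-1 *: (a + b)) (`|a + b|^-1 *: (a + b)) c.
Proof.
move=> m s0; have [a1 b1 c1 e] := m.
have n0 : `|a + b| != 0 by rewrite normr_eq0.
have np : `| (`|a + b|^-1) *: (a + b) | = 1.
  by rewrite normrZ ger0_norm ?invr_ge0 // mulVf.
split=> //.
rewrite CZl C12 CZl (PLs m) ipxx c1 expr1n.
by field.
Qed.

Lemma triple a b c : mx a b c -> M != 0 -> ip a b != 1 -> ip a b != -1 ->
  exists l m : R, c = l *: a + m *: b.
Proof.
move=> m M0 n1 nm1.
have [a1 b1 c1 e] := m.
have s0 : a + b != 0.
  apply: contra nm1 => /eqP h; have -> : b = - a by rewrite -(addKr a b) h addr0.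
  by rewrite ipC ipNl ipxx a1 expr1n.
have ns : `|a + b| != 0 by rewrite normr_eq0.
set p := `|a + b|^-1 *: (a + b).
have mp : mx p p c by exact: SM.
have hZ y : C c c y = M * (2 * ip p c * ip p y - ip c y).
  have := PL (mx23 mp) y; rewrite (L1 mp y) => h. lra.
have hZ' y : 2 * C c c y = 2 * M * (ip a c * ip b y + ip b c * ip a y - ip a b * ip c y).
  have h1 := PL m y.
  have h2 := PL (mx23 m) y.
  have h3 := PL (mx23 (mx12 m)) y.
  lra.
have key y : (1 - ip a b) * ip c y =
   (2 * ip p c * `|a + b|^-1 - ip b c) * ip a y + (2 * ip p c * `|a + b|^-1 - ip a c) * ip b y.
  have h := hZ' y; rewrite hZ in h.
  have h' : 2 * ip p c * ip p y - ip c y = ip a c * ip b y + ip b c * ip a y - ip a b * ip c y.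
    apply: (mulfI M0); lra.
  have hp : ip p y = `|a + b|^-1 * (ip a y + ip b y) by rewrite /p ipZl ipDl'.
  rewrite hp in h'; lra.
have a0 : 1 - ip a b != 0 by rewrite subr_eq0 eq_sym.
exists ((1 - ip a b)^-1 * (2 * ip p c * `|a + b|^-1 - ip b c)).
exists ((1 - ip a b)^-1 * (2 * ip p c * `|a + b|^-1 - ip a c)).
apply/eqP; rewrite -subr_eq0; apply/eqP; apply: ip_eq0 => y.
rewrite ipBl ipDl' !ipZl.
apply: (mulfI a0); rewrite mulr0 mulrBr key mulrDr !mulrA (mulfV a0) !mul1r /p ipZl; ring.
Qed.

End Tri.

Lemma scale_bound (g : V -> R) (K : R) :
  (forall a u v, g (a *: u + v) = a * g u + g v) ->
  (forall u, `|u| <= 1 -> `|g u| <= K) -> forall u, `|g u| <= K * `|u|.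
Proof.
move=> lin hb u.
have g0 : g 0 = 0 by have := lin 1 0 0; rewrite scale1r addr0; lra.
have gZ a x : g (a *: x) = a * g x by rewrite -[a *: x]addr0 lin g0 addr0.
have [->|u0] := eqVneq u 0; first by rewrite g0 normr0 normr0 mulr0.
have n0 : `|u| != 0 by rewrite normr_eq0.
have hu : u = `|u| *: (`|u|^-1 *: u) by rewrite scalerA mulfV // scale1r.
rewrite {1}hu gZ normrM normr_id mulrC.
apply: ler_wpM2r => //; apply: hb.
by rewrite normrZ ger0_norm ?invr_ge0 // mulVf.
Qed.

Lemma full_bound (C : V -> V -> V -> R) (M : R) :
  (forall a u u' v w, C (a *: u + u') v w = a * C u v w + C u' v w) ->
  (forall u v w, C u v w = C v u w) ->
  (forall u v w, C u v w = C u w v) ->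
  (forall u v w, `|u| <= 1 -> `|v| <= 1 -> `|w| <= 1 -> `|C u v w| <= M) ->
  forall u v w, `|C u v w| <= M * `|u| * `|v| * `|w|.
Proof.
move=> Clin C12 C23 hb.
have s1 v w : `|v| <= 1 -> `|w| <= 1 -> forall u, `|C u v w| <= M * `|u|.
  move=> hv hw; apply: (scale_bound (g := fun u => C u v w)) => //.
  by move=> u hu; apply: hb.
have s2 w : `|w| <= 1 -> forall u v, `|C u v w| <= M * `|u| * `|v|.
  move=> hw u; apply: (scale_bound (g := fun v => C u v w)).
  - by move=> a x y; rewrite /= (C12 u (a *: x + y)) (C12 u x) (C12 u y) Clin.
  - by move=> v hv; apply: s1.
move=> u v; apply: (scale_bound (g := fun w => C u v w)).
- move=> a x y /=; have e z : C u v z = C z u v by rewrite C23 C12.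
  by rewrite !e Clin.
- by move=> w hw; apply: s2.
Qed.

Lemma triple_abs (C : V -> V -> V -> R) (M : R) a b c :
  (forall a u u' v w, C (a *: u + u') v w = a * C u v w + C u' v w) ->
  (forall u v w, C u v w = C v u w) ->
  (forall u v w, C u v w = C u w v) ->
  (forall u v w, `|C u v w| <= M * `|u| * `|v| * `|w|) ->
  `|a| = 1 -> `|b| = 1 -> `|c| = 1 -> `|C a b c| = M -> M != 0 ->
  ip a b != 1 -> ip a b != -1 -> exists l m : R, c = l *: a + m *: b.
Proof.
move=> Clin C12 C23 Cb a1 b1 c1 e M0 n1 n2.
have [h|h] := ler0P (C a b c).
- pose C' u v w := - C u v w.
  apply: (@triple C' M) => //.
  + by move=> *; rewrite /C' Clin; ring.
  + by move=> *; rewrite /C' C12.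
  + by move=> *; rewrite /C' C23.
  + by move=> *; rewrite /C' normrN.
  + by split=> //; rewrite /C' -e ler0_norm.
- apply: (@triple C M) => //.
  by split=> //; rewrite -e gtr0_norm.
Qed.
End IP.
Section TL.
Context (R : realType) (V : normedModType R) (k : nat) (T : ('I_k -> V) -> R).
Hypothesis hlin : multilinear T.

Lemma upd_same (w : 'I_k -> V) i : upd w i (w i) = w.
Proof. by apply: funext => j; rewrite /upd; case: eqP => // ->. Qed.
Lemma upd_at (w : 'I_k -> V) i u : upd w i u i = u.
Proof. by rewrite /upd eqxx. Qed.
Lemma upd_ne (w : 'I_k -> V) i j u : j != i -> upd w i u j = w j.
Proof. by rewrite /upd => /negbTE ->. Qed.
Lemma upd_comm (w : 'I_k -> V) i j u v : i != j ->
  upd (upd w i u) j v = upd (upd w j v) i u.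
Proof.
move=> ij; apply: funext => m; rewrite /upd.
case: (eqVneq m j) => [mj|mj]; case: (eqVneq m i) => [mi|mi] //.
by move: ij; rewrite -mi -mj eqxx.
Qed.

Lemma T0 w i : T (upd w i 0) = 0.
Proof. have := hlin w i 1 0 0; rewrite scale1r addr0; lra. Qed.
Lemma TZ w i a u : T (upd w i (a *: u)) = a * T (upd w i u).
Proof. by rewrite -[a *: u]addr0 hlin T0 addr0. Qed.

Lemma T_scale_all (e : R) (w : 'I_k -> V) :
  T (fun j => e *: w j) = e ^+ k * T w.
Proof.
suff H n : T (fun j : 'I_k => if (j < n)%N then e *: w j else w j) = e ^+ (minn n k) * T w.
  have := H k; rewrite minnn => <-; congr T; apply: funext => j; by rewrite ltn_ord.
elim: n => [|n IH].
  rewrite min0n expr0 mul1r; congr T; exact: funext.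
have [nk|kn] := ltnP n k.
  set o : 'I_k := Ordinal nk.
  have -> : (fun j : 'I_k => if (j < n.+1)%N then e *: w j else w j) =
            upd (fun j : 'I_k => if (j < n)%N then e *: w j else w j) o (e *: w o).
    apply: funext => j; rewrite /upd ltnS leq_eqVlt.
    case: (eqVneq j o) => [->|jo] /=; first by rewrite eqxx.
    suff -> : (j == n :> nat) = false by [].
    by apply/negbTE; apply: contra jo => /eqP h; apply/eqP; apply: val_inj.
  rewrite TZ.
  have Hw : w o = (fun j : 'I_k => if (j < n)%N then e *: w j else w j) o by rewrite /= ltnn.
  rewrite Hw upd_same IH.
  have -> : minn n.+1 k = (minn n k).+1 by rewrite !minnE; lia.
  by rewrite exprS mulrA.
have -> : minn n.+1 k = minn n k by rewrite !minnE; lia.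
rewrite -IH; congr T; apply: funext => j.
have : (j < n)%N by exact: leq_trans (ltn_ord j) kn.
by move=> h; rewrite h ltnS (ltnW h).
Qed.

Lemma bounded_T : (0 < k)%N -> form_continuous T ->
  exists K, forall w, (forall i, `|w i| <= 1) -> `|T w| <= K.
Proof.
move=> k0 hc.
case: (pselect (exists K, forall w, (forall i, `|w i| <= 1) -> `|T w| <= K)) => // nH.
exfalso.
have H n : exists w : 'I_k -> V, (forall i, `|w i| <= 1) /\ n.+1%:R ^+ k < `|T w|.
  case: (pselect (exists w : 'I_k -> V, (forall i, `|w i| <= 1) /\ n.+1%:R ^+ k < `|T w|)) => // nw.
  case: nH; exists (n.+1%:R ^+ k) => w hw; rewrite leNgt; apply/negP => lt.
  by apply: nw; exists w.
have [w hw] := choice H.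
pose z := fun n => ((fun i => (n.+1%:R)^-1 *: w n i) : {ptws 'I_k -> V}).
have Tz n : 1 < `|T (z n)|.
  have [_ h] := hw n.
  have p : 0 < n.+1%:R ^+ k :> R by apply: exprn_gt0.
  rewrite /z T_scale_all normrM normrX ger0_norm ?invr_ge0 // exprVn mulrC ltr_pdivlMr // mul1r.
  exact: h.
have cz : z @ \oo --> ((fun _ => 0) : {ptws 'I_k -> V}).
  have := (@pointwise_cvgP (discrete_topology 'I_k) V (z @ \oo) (fun _ => 0) _).2.
  apply => t; apply/cvgr0Pnorm_lt => eps eps0.
  have := near_infty_natSinv_lt (PosNum eps0); apply: filterS => n hn.
  rewrite /z /= normrZ ger0_norm ?invr_ge0 //.
  apply: le_lt_trans hn.
  have [h1 _] := hw n.
  by rewrite -[X in _ <= X]mulr1; apply: ler_wpM2l => //; rewrite invr_ge0.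
have T00 : T (fun _ => 0) = 0.
  have -> : (fun _ : 'I_k => (0 : V)) = upd (fun _ => 0) (Ordinal k0) 0.
    by apply: funext => j; rewrite /upd; case: ifP.
  exact: T0.
have cT : (T \o z) @ \oo --> T (fun _ => 0) by apply: continuous_cvg; [exact: hc | exact: cz].
rewrite T00 in cT.
have h1 : \forall n \near \oo, `|(T \o z) n| < 1 by move/cvgr0Pnorm_lt: cT; apply.
have [n hn] := filter_ex h1.
by have := Tz n; rewrite ltNge (ltW hn).
Qed.

Hypothesis hsym : sym_form T.

Lemma TS w i j u v : i != j -> T (upd (upd w i u) j v) = T (upd (upd w i v) j u).
Proof.
move=> ij; rewrite -(hsym (tperm i j) (upd (upd w i u) j v)); congr T.
apply: funext => m; rewrite /upd.
have ji : j != i by rewrite eq_sym.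
case: (tpermP i j m) => [->|->|mi mj].
- by rewrite !eqxx ?(negbTE ij) ?(negbTE ji).
- by rewrite !eqxx ?(negbTE ij) ?(negbTE ji).
- by move/eqP/negbTE: mi => ->; move/eqP/negbTE: mj => ->.
Qed.

Section Three.
Context (x : 'I_k -> V) (i j l : 'I_k).
Hypotheses (ij : i != j) (il : i != l) (jl : j != l).
Definition D3 u v w := T (upd (upd (upd x i u) j v) l w).

Lemma D3lin a u u' v w : D3 (a *: u + u') v w = a * D3 u v w + D3 u' v w.
Proof.
have e z : upd (upd (upd x i z) j v) l w = upd (upd (upd x j v) l w) i z.
  by rewrite (@upd_comm _ i j _ _ ij) (@upd_comm _ i l _ _ il).
by rewrite /D3 !e hlin.
Qed.

Lemma D3_12 u v w : D3 u v w = D3 v u w.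
Proof.
have e a b : upd (upd (upd x i a) j b) l w = upd (upd (upd x l w) i a) j b.
  by rewrite (@upd_comm _ j l _ _ jl) (@upd_comm _ i l _ _ il).
by rewrite /D3 !e TS.
Qed.

Lemma D3_23 u v w : D3 u v w = D3 u w v.
Proof. by rewrite /D3 TS. Qed.

Lemma D3x : D3 (x i) (x j) (x l) = T x.
Proof. by rewrite /D3 !upd_same. Qed.

Lemma D3_unit (K : R) : (forall w, (forall m, `|w m| <= 1) -> `|T w| <= K) ->
  (forall m, `|x m| = 1) ->
  forall u v w, `|u| <= 1 -> `|v| <= 1 -> `|w| <= 1 -> `|D3 u v w| <= K.
Proof.
move=> hK hx u v w hu hv hw; apply: hK => m; rewrite /upd.
by case: ifP => _ //; case: ifP => _ //; case: ifP => _ //; rewrite hx.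
Qed.
End Three.
End TL.

Lemma in_span2 (R : realType) (V : normedModType R) (u0 u1 v : V) :
  (exists a b : R, v = a *: u0 + b *: u1) ->
  in_span (fun t : 'I_2 => if val t == 0%N then u0 else u1) v.
Proof.
case=> a [b ->]; exists (fun t : 'I_2 => if val t == 0%N then a else b).
by rewrite !big_ord_recl big_ord0 /= addr0.
Qed.

Lemma unit_pm (R : realType) (V : normedModType R) (ip : V -> V -> R) (a b : V) :
  is_inner_product ip -> `|a| = 1 -> `|b| = 1 ->
  (ip a b = 1 -> b = a) /\ (ip a b = -1 -> b = - a).
Proof.
move=> hip a1 b1.
have ipx := ipxx hip.
split=> h.
- have : `|b - a| ^+ 2 = 0.
    rewrite -ipx (ipBl hip) !(ipBr hip) ipx ipx a1 b1 (ipC hip b a) h; ring.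
  by move/eqP; rewrite sqrf_eq0 normr_eq0 subr_eq0 => /eqP.
- have : `|b + a| ^+ 2 = 0.
    rewrite -ipx (ipDl' hip) !(ipDr hip) ipx ipx a1 b1 (ipC hip b a) h; ring.
  by move/eqP; rewrite sqrf_eq0 normr_eq0 addr_eq0 => /eqP.
Qed.

Unset Implicit Arguments.

Theorem proposition4p1 (R : realType) (V : completeNormedModType R)
  (ip : V -> V -> R) (k : nat) (T : ('I_k -> V) -> R) (x : 'I_k -> V) :
  is_inner_product ip ->
  (0 < k)%N ->
  multilinear T ->
  sym_form T ->
  form_continuous T ->
  (exists w, T w != 0) ->
  (forall i, `|x i| = 1) ->
  `|T x| = form_norm T ->
  (* dim span{x_1,...,x_k} <= 2 : the span is contained in the span of two vectors *)
  exists u : 'I_2 -> V, forall i, in_span u (x i).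
Proof.
move=> hip k0 hlin hsym hc [w0 hw0] hx hM.
set M := form_norm T in hM.
have [K hK] := bounded_T hlin k0 hc.
have ub w : (forall i, `|w i| <= 1) -> `|T w| <= M.
  move=> hw; apply: ub_le_sup; last by exists w.
  by exists K => y [w' hw' <-]; exact: hK.
have Mpos : 0 < M.
  pose s := \sum_i `|w0 i|.
  have s0 : 0 <= s by apply: sumr_ge0.
  pose e := (1 + s)^-1.
  have e0 : 0 < e by rewrite invr_gt0; lra.
  have hy i : `|e *: w0 i| <= 1.
    rewrite normrZ gtr0_norm // /e mulrC ler_pdivrMr; last by lra.
    have : `|w0 i| <= s by rewrite /s (bigD1 i) //= lerDl sumr_ge0.
    lra.
  have := ub _ hy; rewrite (T_scale_all hlin) normrM normrX gtr0_norm //.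
  have : 0 < e ^+ k * `|T w0| by rewrite mulr_gt0 ?exprn_gt0 ?normr_gt0.
  lra.
have M0 : M != 0 by rewrite gt_eqF.
have trip i j l : i != j -> i != l -> j != l -> ip (x i) (x j) != 1 ->
    ip (x i) (x j) != -1 -> exists a b : R, x l = a *: x i + b *: x j.
  move=> ij il jl n1 n2.
  apply: (@triple_abs R V ip hip (D3 T x i j l) M) => //.
  - by move=> *; apply: D3lin.
  - by move=> *; apply: D3_12.
  - by move=> *; apply: D3_23.
  - apply: full_bound.
    + by move=> *; apply: D3lin.
    + by move=> *; apply: D3_12.
    + by move=> *; apply: D3_23.
    + exact: D3_unit ub hx.
  - by rewrite D3x.
have ip11 i : ip (x i) (x i) = 1 by rewrite (ipxx hip) hx expr1n.
case: (pselect (exists i j, ip (x i) (x j) != 1 /\ ip (x i) (x j) != -1)).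
  case=> i [j [n1 n2]].
  have ij : i != j by apply: contra n1 => /eqP ->; rewrite ip11.
  exists (fun t : 'I_2 => if val t == 0%N then x i else x j) => l.
  apply: in_span2.
  case: (eqVneq l i) => [->|li]; first by exists 1, 0; rewrite scale1r scale0r addr0.
  case: (eqVneq l j) => [->|lj]; first by exists 0, 1; rewrite scale1r scale0r add0r.
  by apply: trip => //; rewrite eq_sym.
move=> nex.
pose i0 : 'I_k := Ordinal k0.
exists (fun t : 'I_2 => if val t == 0%N then x i0 else x i0) => l.
apply: in_span2.
have [h1 h2] := unit_pm hip (hx i0) (hx l).
case: (eqVneq (ip (x i0) (x l)) 1) => [e1|e1].
  by exists 1, 0; rewrite scale1r scale0r addr0 h1.
case: (eqVneq (ip (x i0) (x l)) (-1)) => [e2|e2].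
  by exists (-1), 0; rewrite scaleN1r scale0r addr0 h2.
by case: nex; exists i0, l.
Qed.
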